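(* Let $\phi:T_1\times\cdots\times T_k\to T$ be a multi-valued logic gate with Fourier series expansion $\overline{\phi}$. If $\mathrm{cs}(\overline{\phi})=N(\overline{\phi})$, then $\overline{\phi}$ is one-to-one on the interior of $\Delta^{n_1-1}\times\cdots\times\Delta^{n_k-1}$.
   Context: Standard simplex: $\Delta^{m}=\{(t_0,\dots,t_m)\in\mathbb{R}^{m+1}: t_i\ge 0,\ \sum_i t_i=1\}$. For $0\le j\le m$, $\Delta^m_j=\{(t_0,\dots,\widehat{t_j},\dots,t_m): (t_0,\dots,t_m)\in\Delta^m,\ t_j\neq 0\}\subseteq\mathbb{R}^m$ (the hat means the coordinate is omitted). Multi-valued logic gate: $k\ge1$; for $i=1,\dots,k$ a finite set $T_i=\{w(i,0),\dots,w(i,n_i-1)\}$ with $n_i$ elements; a finite set $T=\{v_1,\dots,v_n\}\subset\mathbb{R}^m$; and a function $\phi:T_1\times\cdots\times T_k\to T$. Its Fourier series expansion is $\overline{\phi}:\Delta^{n_1-1}\times\cdots\times\Delta^{n_k-1}\to\mathbb{R}^m$, $\overline{\phi}\big((t_{1,j})_{j=0}^{n_1-1},\dots,(t_{k,j})_{j=0}^{n_k-1}\big)=\sum_{(j_1,\dots,j_k)}\Big(\prod_{s=1}^k t_{s,j_s}\Big)\,\phi(w(1,j_1),\dots,w(k,j_k))$, the sum over all $0\le j_s\le n_s-1$. Put $N=N(\overline{\phi})=n_1+\cdots+n_k-k$. For $z=(w(1,j(z,1)),\dots,w(k,j(z,k)))\in T_1\times\cdots\times T_k$: $C(\overline{\phi},z)=\Delta^{n_1-1}_{j(z,1)}\times\cdots\times\Delta^{n_k-1}_{j(z,k)}\subseteq\mathbb{R}^N$,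 and $f_z:\mathbb{R}^N\to\mathbb{R}^m$ is the polynomial map in the variables $t_{i,j}$ ($1\le i\le k$, $0\le j\le n_i-1$, $j\neq j(z,i)$, ordered lexicographically by $(i,j)$) obtained from the multilinear polynomial formula for $\overline{\phi}$ by substituting $t_{i,j(z,i)}=1-\sum_{0\le j\le n_i-1,\,j\neq j(z,i)}t_{i,j}$. Sign conventions: $\mathrm{sgn}(x)\in\{+1,0,-1\}$ is the usual sign. For $g:\mathbb{R}^N\to\mathbb{R}$ and nonempty $C$, $\mathrm{sign}_C(g)=+1$, $0$, $-1$ if $g>0$, $g=0$, $g<0$ on all of $C$ respectively, and $u$ (formal symbol) otherwise; for differentiable $g$, $\mathrm{Sign}_C(g)=(\mathrm{sign}_C(\partial g/\partial x_1),\dots,\mathrm{sign}_C(\partial g/\partial x_N))$. $S_N$: the set of nonzero $s\in\{-1,0,1\}^N$ whose first nonzero entry is $1$. A tuple $t\in\{1,0,-1,u\}^N$ eliminates $s\in S_N$ if (i) $t_i\ne0$ and $s_i\neq0$ for some $i$; (ii) there is $k\in\{\pm1\}$ with $t_i=ks_i$ whenever $s_i\neq0$ and $t_i\neq0$; (iii) $s_i=0$ whenever $t_i=u$. For a set $X$ of such tuples, $\mathrm{Elim}(X)$ is the set of elements of $S_N$ eliminated by some element of $X$. For convex $C\subseteq\mathbb{R}^N$ and differentiable $f:\mathbb{R}^N\to\mathbb{R}^m$, $\mathrm{Sens}_C(f)$ is the set of $v\in S_N$ such that $\mathrm{Sign}_C(\pi\circ f)$ eliminates $v$ for some differentiable $\pi:\mathbb{R}^m\to\mathbb{R}$.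 Continuous sensitivity: $\mathrm{cs}(\overline{\phi},z)=\log_3\big(3^{N}-2\,|\mathrm{Elim}(S_N\setminus\mathrm{Sens}_{C(\overline{\phi},z)}(f_z))|\big)$ and $\mathrm{cs}(\overline{\phi})=\max_{z\in T_1\times\cdots\times T_k}\mathrm{cs}(\overline{\phi},z)$. *)

(* Defs.v *)
From Stdlib Require Import Reals ClassicalEpsilon.
From HB Require Import structures.
From mathcomp Require Import all_boot.
Set Implicit Arguments. Unset Strict Implicit. Unset Printing Implicit Defensive.

Local Open Scope R_scope.

Definition pbool (P : Prop) : bool :=
  if excluded_middle_informative P then true else false.

Inductive sign4 := SPos | SZero | SNeg | SU.

Definition sign4_to_nat (s : sign4) : nat :=
  match s with SPos => 0 | SZero => 1 | SNeg => 2 | SU => 3 end.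
Definition nat_to_sign4 (n : nat) : sign4 :=
  match n with 0 => SPos | 1 => SZero | 2 => SNeg | _ => SU end.
Lemma sign4_natK : cancel sign4_to_nat nat_to_sign4.
Proof. by case. Qed.
HB.instance Definition _ := Countable.copy sign4 (can_type sign4_natK).
Definition sign4_enum := [:: SPos; SZero; SNeg; SU].
Lemma sign4_enumP : Finite.axiom sign4_enum.
Proof. by case. Qed.
HB.instance Definition _ := isFinite.Build sign4 sign4_enumP.

(* k * s for k in {+1,-1} (b = true means k = +1). *)
Definition smul (b : bool) (s : sign4) : sign4 :=
  if b then s else match s with SPos => SNeg | SNeg => SPos | _ => s end.

(* A gate with k inputs, T_i = {w(i,0),...,w(i,n_i-1)} encoded by indices
   'I_(n i), values in R^m = ('I_m -> R).  An input z is an index tuple. *)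
Definition itup (k : nat) (n : 'I_k -> nat) := {dffun forall i : 'I_k, 'I_(n i)}.

Definition bpoint (k : nat) (n : 'I_k -> nat) := forall i : 'I_k, 'I_(n i) -> R.

(* Fourier series expansion  phibar (as a polynomial map, for any reals t) *)
Definition phibar (k : nat) (n : 'I_k -> nat) (m : nat)
  (phi : itup n -> 'I_m -> R) (t : bpoint n) : 'I_m -> R :=
  fun c => \big[Rplus/0]_(j : itup n)
             ((\big[Rmult/1]_(s < k) t s (j s)) * phi j c).

Definition Nof (k : nat) (n : 'I_k -> nat) : nat := ((\sum_(i < k) n i) - k)%N.

(* Interior of Delta^{n_1-1} x ... x Delta^{n_k-1} (relative interior). *)
Definition in_interior (k : nat) (n : 'I_k -> nat) (t : bpoint n) : Prop :=
  (forall i j, 0 < t i j) /\ (forall i, \big[Rplus/0]_(j < n i) t i j = 1).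

(* Coordinates of R^N: variables t_{i,j}, j <> j(z,i), ordered lexicographically.
   Block i starts at offset  sum_{i' < i} (n_{i'} - 1). *)
Definition offs (k : nat) (n : 'I_k -> nat) (i : 'I_k) : nat :=
  (\sum_(i' < k | (i' < i)%N) (n i' - 1))%N.
Definition cidx (k : nat) (n : 'I_k -> nat) (z : itup n) (i : 'I_k) (j : 'I_(n i)) : nat :=
  (offs n i + (if (j < z i)%N then nat_of_ord j else (nat_of_ord j).-1))%N.
Definition xat (N : nat) (x : 'I_N -> R) (c : nat) : R :=
  match @insub nat (fun c => (c < N)%N) 'I_N c with Some c' => x c' | None => 0 end.

Definition expand (k : nat) (n : 'I_k -> nat) (z : itup n) (x : 'I_(Nof n) -> R)
  : bpoint n :=
  fun i j => if j == z i
             then 1 - \big[Rplus/0]_(j' < n i | j' != z i) xat x (cidx z j')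
             else xat x (cidx z j).

Arguments expand {k n} z x i j.

Definition f_z (k : nat) (n : 'I_k -> nat) (m : nat) (phi : itup n -> 'I_m -> R)
  (z : itup n) (x : 'I_(Nof n) -> R) : 'I_m -> R := phibar phi (expand z x).

Definition Cset (k : nat) (n : 'I_k -> nat) (z : itup n) (x : 'I_(Nof n) -> R) : Prop :=
  (forall i j, 0 <= expand z x i j) /\
  (forall i, \big[Rplus/0]_(j < n i) expand z x i j = 1) /\
  (forall i, expand z x i (z i) <> 0).

Definition upd (N : nat) (x : 'I_N -> R) (c : 'I_N) (h : R) : 'I_N -> R :=
  fun c' => if c' == c then h else x c'.

Definition pderiv (N : nat) (g : ('I_N -> R) -> R) (x : 'I_N -> R) (c : 'I_N) (l : R) : Prop :=
  derivable_pt_lim (fun h => g (upd x c h)) (x c) l.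

Definition supnorm (N : nat) (h : 'I_N -> R) : R := \big[Rmax/0]_(i < N) Rabs (h i).

Definition differentiable (M : nat) (pi : ('I_M -> R) -> R) : Prop :=
  forall y : 'I_M -> R, exists a : 'I_M -> R,
    forall eps, 0 < eps -> exists delta, 0 < delta /\
      forall h : 'I_M -> R, supnorm h < delta ->
        Rabs (pi (fun i => y i + h i) - pi y - \big[Rplus/0]_(i < M) (a i * h i))
          <= eps * supnorm h.

Definition signC (N : nat) (C : ('I_N -> R) -> Prop) (g : ('I_N -> R) -> R) (c : 'I_N)
  : sign4 :=
  if pbool (forall x, C x -> exists l, pderiv g x c l /\ 0 < l) then SPos
  else if pbool (forall x, C x -> pderiv g x c 0) then SZero
  else if pbool (forall x, C x -> exists l, pderiv g x c l /\ l < 0) then SNeg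
  else SU.

Definition SignC (N : nat) (C : ('I_N -> R) -> Prop) (g : ('I_N -> R) -> R)
  : 'I_N -> sign4 := fun c => signC C g c.

Definition S_N (N : nat) : {set {ffun 'I_N -> sign4}} :=
  [set s : {ffun 'I_N -> sign4} |
    [&& [forall i, s i != SU], [exists i, s i != SZero] &
        [forall i, ((s i != SZero) && [forall i' : 'I_N, (i' < i)%N ==> (s i' == SZero)])
                     ==> (s i == SPos)]]].

Definition eliminates (N : nat) (t s : 'I_N -> sign4) : Prop :=
  (exists i, t i <> SZero /\ s i <> SZero) /\
  (exists b : bool, forall i, s i <> SZero -> t i <> SZero -> t i = smul b (s i)) /\
  (forall i, t i = SU -> s i = SZero).

Definition Elim (N : nat) (X : {set {ffun 'I_N -> sign4}}) : {set {ffun 'I_N -> sign4}} :=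
  [set s in S_N N | pbool (exists t, t \in X /\ eliminates t s)].

Definition Sens (N M : nat) (C : ('I_N -> R) -> Prop) (f : ('I_N -> R) -> ('I_M -> R))
  : {set {ffun 'I_N -> sign4}} :=
  [set v in S_N N | pbool (exists pi : ('I_M -> R) -> R,
                              differentiable pi /\ eliminates (SignC C (fun x => pi (f x))) v)].

Definition log3 (x : R) : R := ln x / ln 3.

Definition cs_z (k : nat) (n : 'I_k -> nat) (m : nat) (phi : itup n -> 'I_m -> R)
  (z : itup n) : R :=
  log3 (3 ^ Nof n
        - 2 * INR #|Elim (S_N (Nof n) :\: Sens (@Cset k n z) (f_z phi z))|).

(* cs(phibar) = max over z (all cs(phibar,z) are >= 0, so 0 is a neutral start) *)
Definition cs (k : nat) (n : 'I_k -> nat) (m : nat) (phi : itup n -> 'I_m -> R) : R :=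
  \big[Rmax/0]_(z : itup n) cs_z phi z.

(* Main.v *)
Require Import Defs.
From Stdlib Require Import Reals Lra FunctionalExtensionality ClassicalEpsilon Classical.
From HB Require Import structures.
From mathcomp Require Import all_boot zify.
From Stdlib Require Import Lia.
Set Implicit Arguments. Unset Strict Implicit. Unset Printing Implicit Defensive.

HB.instance Definition _ := Monoid.isComLaw.Build R (IZR Z0) Rplus (fun a b c => esym (Rplus_assoc a b c)) Rplus_comm Rplus_0_l.

Lemma offs_lt k (n : 'I_k -> nat) (i i' : 'I_k) :
  (i' < i)%N -> (offs n i' + (n i' - 1) <= offs n i)%N.
Proof.
move=> lt; rewrite /offs.
rewrite [X in (_ <= X)%N](bigD1 i') //= addnC.
rewrite leq_add2l.
rewrite big_mkcond /= [X in (_ <= X)%N]big_mkcond /=.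
apply: leq_sum => i'' _.
case: ifP => // h1.
rewrite andbC -[i'' != i']negbK.
have -> : (i'' != i') by apply/eqP => E; move: h1; rewrite E ltnn.
by rewrite (ltn_trans h1 lt).
Qed.

Lemma offs_tot k (n : 'I_k -> nat) (i : 'I_k) :
  (offs n i + (n i - 1) <= \sum_(i' < k) (n i' - 1))%N.
Proof.
rewrite /offs [X in (_ <= X)%N](bigD1 i) //= [X in (_ <= X)%N]addnC leq_add2r.
rewrite big_mkcond /= [X in (_ <= X)%N]big_mkcond /=.
apply: leq_sum => i'' _.
case: ifP => // h1.
by have -> : (i'' != i) by apply/eqP => E; move: h1; rewrite E ltnn.
Qed.

Lemma Nof_eq k (n : 'I_k -> nat) : (forall i, 0 < n i)%N ->
  Nof n = (\sum_(i < k) (n i - 1))%N.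
Proof.
move=> pos; rewrite /Nof.
have -> : (\sum_(i < k) n i = \sum_(i < k) (n i - 1) + \sum_(i<k) 1)%N.
  rewrite -big_split /=; apply: eq_bigr => i _; rewrite subnK //; exact: pos.
by rewrite sum1_card card_ord addnK.
Qed.

Definition loc k (n : 'I_k -> nat) (z : itup n) (i : 'I_k) (j : 'I_(n i)) : nat :=
  if (j < z i)%N then nat_of_ord j else (nat_of_ord j).-1.

Lemma loc_lt k (n : 'I_k -> nat) (z : itup n) i (j : 'I_(n i)) :
  j != z i -> (loc z j < n i - 1)%N.
Proof.
rewrite /loc => ne; have := ltn_ord j; have := ltn_ord (z i).
have : nat_of_ord j <> nat_of_ord (z i) by move=> E; move/eqP: ne; apply; apply: val_inj.
case: ifP => /= h; lia.
Qed.

Lemma loc_inj k (n : 'I_k -> nat) (z : itup n) i (j j' : 'I_(n i)) :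
  j != z i -> j' != z i -> loc z j = loc z j' -> j = j'.
Proof.
move=> ne ne'.
have : nat_of_ord j <> nat_of_ord (z i) by move=> E; move/eqP: ne; apply; apply: val_inj.
have : nat_of_ord j' <> nat_of_ord (z i) by move=> E; move/eqP: ne'; apply; apply: val_inj.
rewrite /loc => h1 h2 E; apply: val_inj => /=; move: E.
case: ifP => /= a; case: ifP => /= b; lia.
Qed.

Lemma cidx_loc k (n : 'I_k -> nat) (z : itup n) i (j : 'I_(n i)) :
  cidx z j = (offs n i + loc z j)%N.
Proof. by []. Qed.

Lemma cidx_lt k (n : 'I_k -> nat) (z : itup n) i (j : 'I_(n i)) :
  j != z i -> (cidx z j < Nof n)%N.
Proof.
move=> ne; rewrite cidx_loc Nof_eq; last first.
  by move=> i'; apply: (leq_ltn_trans _ (ltn_ord (z i'))).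
apply: leq_trans (offs_tot n i).
by rewrite ltn_add2l loc_lt.
Qed.

Lemma cidx_neq k (n : 'I_k -> nat) (z : itup n) i i' (j : 'I_(n i)) (j' : 'I_(n i')) :
  j != z i -> j' != z i' -> i != i' -> cidx z j != cidx z j'.
Proof.
move=> ne ne' nii.
have [lt|lt] : (i < i')%N \/ (i' < i)%N.
  by case: (ltngtP i i') => //; [left|right| move=> E; move/eqP: nii; case; apply: val_inj].
- have h1 := offs_lt n lt; have h2 := loc_lt ne.
  rewrite !cidx_loc; apply/eqP; lia.
- have h1 := offs_lt n lt; have h2 := loc_lt ne'.
  rewrite !cidx_loc; apply/eqP; lia.
Qed.

Open Scope R_scope.

Lemma Rsum_le (I : finType) (P : pred I) (F G : I -> R) :
  (forall i, P i -> F i <= G i) ->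
  \big[Rplus/0]_(i | P i) F i <= \big[Rplus/0]_(i | P i) G i.
Proof.
move=> h; apply: (big_ind2 (fun a b => a <= b)); [lra| move=> *; lra | exact: h].
Qed.

Lemma Rlin1 a b : a + b = 1 -> 1 - b = a.
Proof. lra. Qed.

Lemma Rlin2 a b c : c <= b -> a + b = 1 -> 0 < a -> 0 < 1 - c.
Proof. lra. Qed.

Lemma Rlin3 b : 1 - b + b = 1.
Proof. lra. Qed.

Lemma xat_ord N (x : 'I_N -> R) (c : 'I_N) : xat x (nat_of_ord c) = x c.
Proof. by rewrite /xat valK. Qed.

Lemma xat_ge0 N (x : 'I_N -> R) c : (forall c, 0 <= x c) -> 0 <= xat x c.
Proof. by rewrite /xat => h; case: insub => [c'|]; [apply: h| lra]. Qed.

Definition xof k (n : 'I_k -> nat) (z : itup n) (t : bpoint n) : 'I_(Nof n) -> R :=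
  fun c => \big[Rplus/0]_(i < k) \big[Rplus/0]_(j < n i | j != z i)
             (if (cidx z j == nat_of_ord c)%N then t i j else 0).

Lemma xof_at k (n : 'I_k -> nat) (z : itup n) (t : bpoint n) i (j : 'I_(n i)) :
  j != z i -> xat (xof z t) (cidx z j) = t i j.
Proof.
move=> ne; have lt := cidx_lt ne.
have -> : cidx z j = nat_of_ord (Ordinal lt) by [].
rewrite xat_ord /xof (bigD1 i) //= (bigD1 j) //= eqxx.
rewrite big1; last first.
  move=> j' /andP [ne' nej]; case: ifP => // /eqP E.
  by move: nej; rewrite (loc_inj ne' ne) ?eqxx //; move: E; rewrite !cidx_loc /=; lia.
rewrite (big1 _ (fun i' => i' != i)); last first.
  move=> i' nei; apply: big1 => j' ne'; case: ifP => // E.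
  by move: (cidx_neq ne' ne nei); rewrite E.
rewrite /=; lra.
Qed.

Lemma sum_split k (n : 'I_k -> nat) (z : itup n) (t : bpoint n) i :
  \big[Rplus/0]_(j < n i) t i j =
  t i (z i) + \big[Rplus/0]_(j < n i | j != z i) t i j.
Proof. by rewrite (bigD1 (z i)). Qed.

Lemma expand_xof k (n : 'I_k -> nat) (z : itup n) (t : bpoint n) :
  in_interior t -> forall i j, expand z (xof z t) i j = t i j.
Proof.
move=> [_ hs] i j; rewrite /expand; case: eqP => [->|/eqP ne]; last exact: xof_at.
have := hs i; rewrite (sum_split z) => e.
rewrite (eq_bigr (fun j => t i j)); first by apply: Rlin1; exact: e.
by move=> j' ne'; rewrite xof_at.
Qed.

Lemma inC k (n : 'I_k -> nat) (z : itup n) (t : bpoint n) (q : 'I_(Nof n) -> R) :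
  in_interior t -> (forall c, 0 <= q c) -> (forall c, q c <= xof z t c) -> Cset z q.
Proof.
move=> [hp hs] q0 qle.
have piv : forall i, 0 < expand z q i (z i).
  move=> i; rewrite /expand eqxx.
  have : \big[Rplus/0]_(j' < n i | j' != z i) xat q (cidx z j') <=
         \big[Rplus/0]_(j' < n i | j' != z i) t i j'.
    apply: Rsum_le => j' ne; rewrite -(xof_at t ne).
    have lt := cidx_lt ne; have -> : cidx z j' = nat_of_ord (Ordinal lt) by [].
    by rewrite !xat_ord.
  move=> H; have := hs i; rewrite (sum_split z) => e.
  exact: (Rlin2 H e (hp i (z i))).
split; [|split].
- move=> i j; case: (eqVneq j (z i)) => [->|ne]; first by have := piv i; lra.
  by rewrite /expand (negbTE ne); apply: xat_ge0.
- move=> i; rewrite (sum_split z) /expand eqxx.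
  rewrite [X in _ + X = _](eq_bigr (fun j' => xat q (cidx z j'))); first exact: Rlin3.
  by move=> j' ne; rewrite (negbTE ne).
- by move=> i; have := piv i; lra.
Qed.

Lemma pboolT (P : Prop) : pbool P = true -> P.
Proof. by rewrite /pbool; case: excluded_middle_informative. Qed.

Lemma pboolI (P : Prop) : P -> pbool P = true.
Proof. by rewrite /pbool; case: excluded_middle_informative. Qed.

Lemma mvt_gen (f : R -> R) (Q : R -> Prop) a b :
  a < b -> (forall s, a <= s <= b -> exists l, derivable_pt_lim f s l /\ Q l) ->
  exists l, f b - f a = l * (b - a) /\ Q l.
Proof.
move=> ab h.
pose f' := fun s => epsilon (inhabits 0) (fun l => derivable_pt_lim f s l /\ Q l).
have H : forall s, a <= s <= b -> derivable_pt_lim f s (f' s) /\ Q (f' s).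
  by move=> s hs; exact: (epsilon_spec _ _ (h s hs)).
have [c [e hc]] := MVT_cor2 f f' a b ab (fun s hs => proj1 (H s hs)).
exists (f' c); split => //; apply: (proj2 (H c _)); lra.
Qed.

Lemma upd_upd N (p : 'I_N -> R) c s h : upd (upd p c s) c h = upd p c h.
Proof.
by apply: functional_extensionality => c'; rewrite /upd; case: eqP.
Qed.

Lemma upd_same N (p : 'I_N -> R) c s : upd p c s c = s.
Proof. by rewrite /upd eqxx. Qed.

Lemma pderiv_upd N (g : ('I_N -> R) -> R) p c s l :
  pderiv g (upd p c s) c l -> derivable_pt_lim (fun h => g (upd p c h)) s l.
Proof.
rewrite /pderiv upd_same.
have -> : (fun h => g (upd (upd p c s) c h)) = (fun h => g (upd p c h)) by
  apply: functional_extensionality => h; rewrite upd_upd.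
done.
Qed.

Lemma step_gen N (C : ('I_N -> R) -> Prop) (g : ('I_N -> R) -> R) p c (Q : R -> Prop) a b :
  (forall s, Rmin a b <= s <= Rmax a b -> C (upd p c s)) ->
  (forall x, C x -> exists l, pderiv g x c l /\ Q l) ->
  a <> b -> exists l, g (upd p c b) - g (upd p c a) = l * (b - a) /\ Q l.
Proof.
move=> hC hQ ne.
have der : forall s, Rmin a b <= s <= Rmax a b ->
    exists l, derivable_pt_lim (fun h => g (upd p c h)) s l /\ Q l.
  move=> s hs; have [l [hl ql]] := hQ _ (hC s hs).
  by exists l; split => //; apply: pderiv_upd.
case: (Rlt_le_dec a b) => ab.
- apply: (mvt_gen (f := fun h => g (upd p c h))) => // s hs; apply: der.
  rewrite Rmin_left ?Rmax_right; lra.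
- have ba : b < a by lra.
  have [l [e ql]] : exists l, g (upd p c a) - g (upd p c b) = l * (a - b) /\ Q l.
    apply: (mvt_gen (f := fun h => g (upd p c h))) => // s hs; apply: der.
    rewrite Rmin_right ?Rmax_left; lra.
  exists l; split => //; lra.
Qed.

Definition stepok (T : sign4) (a b D : R) : Prop :=
  (a = b -> D = 0) /\
  (T = SPos -> (a < b -> 0 < D) /\ (b < a -> D < 0)) /\
  (T = SNeg -> (a < b -> D < 0) /\ (b < a -> 0 < D)) /\
  (T = SZero -> D = 0).

Lemma step_sign N (C : ('I_N -> R) -> Prop) (g : ('I_N -> R) -> R) p c a b :
  (forall s, Rmin a b <= s <= Rmax a b -> C (upd p c s)) ->
  stepok (signC C g c) a b (g (upd p c b) - g (upd p c a)).
Proof.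
move=> hC.
case: (Req_dec a b) => [->|ne].
  split; first lra.
  split; [move=> _; split; lra|split; [move=> _; split; lra| lra]].
split; first by [].
rewrite /signC.
case E1: (pbool _).
  have [l [e ql]] := step_gen hC (pboolT E1) ne.
  split; [move=> _; split => h; nra | split => //].
case E2: (pbool _).
  have [l [e ql]] := step_gen (Q := fun l => l = 0) hC
    (fun x hx => ex_intro _ 0 (conj (pboolT E2 x hx) erefl)) ne.
  split => //; split => // _; rewrite e ql; lra.
case E3: (pbool _).
  have [l [e ql]] := step_gen hC (pboolT E3) ne.
  split => //; split => // _; split => h; nra.
done.
Qed.

Lemma bigmax_cases (I : finType) (F : I -> R) :
  \big[Rmax/0]_(i : I) F i = 0 \/ exists i, \big[Rmax/0]_(i : I) F i = F i.
Proof.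
apply: (big_ind (fun y => y = 0 \/ exists i, y = F i)); first by left.
- move=> x y hx hy; rewrite /Rmax; case: Rle_dec => _; by [].
- by move=> i _; right; exists i.
Qed.

Lemma elim_self N (v : {ffun 'I_N -> sign4}) : v \in S_N N -> eliminates v v.
Proof.
rewrite inE => /and3P [/forallP hU /existsP [i hi] _].
split; first by exists i; split; apply/eqP.
split; first by exists true.
by move=> i' e; move: (hU i'); rewrite e.
Qed.

Lemma log3_eq (y : R) (N : nat) : (0 < N)%N -> log3 y = INR N -> y = 3 ^ N.
Proof.
move=> Np; rewrite /log3.
have l3 : 0 < ln 3 by rewrite -ln_1; apply: ln_increasing; lra.
have INp : 0 < INR N by apply: lt_0_INR; apply/ltP.
case: (Rlt_le_dec 0 y) => yp.
- move=> e; have e2 : ln y = ln (3 ^ N).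
    rewrite ln_pow; last lra.
    by rewrite -e; field; lra.
  apply: ln_inv => //; apply: pow_lt; lra.
- have lnz : ln y = 0.
    unfold ln; destruct (Rlt_dec 0 y) as [h|h]; [exact: (False_ind _ (Rle_not_lt _ _ yp h)) | reflexivity].
  rewrite lnz.
  rewrite /Rdiv Rmult_0_l => e; lra.
Qed.

Lemma cs_extract k (n : 'I_k -> nat) (m : nat) (phi : itup n -> 'I_m -> R) :
  cs phi = INR (Nof n) -> (0 < Nof n)%N ->
  exists z, forall v, v \in S_N (Nof n) -> v \in Sens (@Cset k n z) (f_z phi z).
Proof.
move=> hcs Np.
have INp : 0 < INR (Nof n) by apply: lt_0_INR; apply/ltP.
have := bigmax_cases (fun z => cs_z phi z); rewrite -/(cs phi); case => [e|[z e]].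
  by exfalso; rewrite e in hcs; lra.
exists z; move=> v vS.
rewrite hcs in e; have := log3_eq Np (esym e) => e2.
have c0 : INR #|Elim (S_N (Nof n) :\: Sens (@Cset k n z) (f_z phi z))| = 0 by lra.
have c1 : #|Elim (S_N (Nof n) :\: Sens (@Cset k n z) (f_z phi z))| = 0%N.
  by apply: INR_eq; rewrite c0.
move/eqP: c1; rewrite cards_eq0 => /eqP E.
apply/negPn/negP => vn.
have : v \in Elim (S_N (Nof n) :\: Sens (@Cset k n z) (f_z phi z)).
  rewrite inE vS /=; apply: pboolI; exists v; split; last exact: elim_self.
  by rewrite inE vn vS.
by rewrite E inE.
Qed.

Definition sgn4 (r : R) : sign4 :=
  if Rlt_dec 0 r then SPos else if Rlt_dec r 0 then SNeg else SZero.

Lemma sgn4_pos r : 0 < r -> sgn4 r = SPos.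
Proof. by rewrite /sgn4; case: Rlt_dec. Qed.
Lemma sgn4_neg r : r < 0 -> sgn4 r = SNeg.
Proof. move=> h; rewrite /sgn4; case: Rlt_dec => h'; [lra|]; by case: Rlt_dec. Qed.
Lemma sgn4_zero r : r = 0 -> sgn4 r = SZero.
Proof. move=> h; rewrite /sgn4; case: Rlt_dec => h'; [lra|]; case: Rlt_dec => h''; [lra|done]. Qed.
Lemma sgn4_nz r : sgn4 r <> SZero -> r <> 0.
Proof. by move=> h e; apply: h; apply: sgn4_zero. Qed.

Lemma coord (T : sign4) (bb : bool) (eps a a' D1 D2 : R) :
  (eps = 1 \/ eps = -1) ->
  stepok T a (Rmin a a') D1 -> stepok T (Rmin a a') a' D2 ->
  (sgn4 (eps*(a'-a)) <> SZero -> T <> SZero -> T = smul bb (sgn4 (eps*(a'-a)))) ->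
  (T = SU -> sgn4 (eps*(a'-a)) = SZero) ->
  0 <= (if bb then eps else - eps) * (D1 + D2) /\
  (T <> SZero -> sgn4 (eps*(a'-a)) <> SZero -> 0 < (if bb then eps else - eps) * (D1 + D2)).
Proof.
move=> he [z1 [p1 [n1 s1]]] [z2 [p2 [n2 s2]]] H3 H4.
have [h|[h|h]] := Rtotal_order a a'.
- rewrite Rmin_left in z1 p1 n1 s1 z2 p2 n2 s2; last lra.
  have z1' := z1 erefl.
  case: he => ?; subst eps.
  + have sp : sgn4 (1 * (a' - a)) = SPos by apply: sgn4_pos; lra.
    rewrite sp in H3 H4 *.
    case: T H3 H4 p2 n2 s2 {z1 p1 n1 s1 z2} => H3 H4 p2 n2 s2.
    * have := proj1 (p2 erefl) h; case: bb H3 => H3; last by case: (H3 ltac:(by []) ltac:(by [])).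
      split; [|move=> *]; lra.
    * move: (s2 erefl) => e2; rewrite z1' e2 Rplus_0_r Rmult_0_r; split; [lra|done].
    * have := proj2 (n2 erefl) ; have := proj1 (n2 erefl) h; case: bb H3 => H3; first by case: (H3 ltac:(by []) ltac:(by [])).
      move=> *; split; [|move=> *]; lra.
    * by have := H4 erefl.
  + have sp : sgn4 (-1 * (a' - a)) = SNeg by apply: sgn4_neg; lra.
    rewrite sp in H3 H4 *.
    case: T H3 H4 p2 n2 s2 {z1 p1 n1 s1 z2} => H3 H4 p2 n2 s2.
    * have := proj1 (p2 erefl) h; case: bb H3 => H3; first by case: (H3 ltac:(by []) ltac:(by [])).
      move=> *; split; [|move=> *]; lra.
    * move: (s2 erefl) => e2; rewrite z1' e2 Rplus_0_r Rmult_0_r; split; [lra|done].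
    * have := proj1 (n2 erefl) h; case: bb H3 => H3; last by case: (H3 ltac:(by []) ltac:(by [])).
      move=> *; split; [|move=> *]; lra.
    * by have := H4 erefl.
- subst a'; rewrite Rmin_left in z1 z2; last lra.
  rewrite (z1 erefl) (z2 erefl) sgn4_zero; last lra.
  split; [lra| by []].
- rewrite Rmin_right in z1 p1 n1 s1 z2 p2 n2 s2; last lra.
  have z2' := z2 erefl.
  case: he => ?; subst eps.
  + have sp : sgn4 (1 * (a' - a)) = SNeg by apply: sgn4_neg; lra.
    rewrite sp in H3 H4 *.
    case: T H3 H4 p1 n1 s1 {z1 p2 n2 s2 z2} => H3 H4 p1 n1 s1.
    * have := proj2 (p1 erefl) h; case: bb H3 => H3; first by case: (H3 ltac:(by []) ltac:(by [])).
      move=> *; split; [|move=> *]; lra.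
    * move: (s1 erefl) => e1; rewrite z2' e1 Rplus_0_r Rmult_0_r; split; [lra|done].
    * have := proj2 (n1 erefl) h; case: bb H3 => H3; last by case: (H3 ltac:(by []) ltac:(by [])).
      move=> *; split; [|move=> *]; lra.
    * by have := H4 erefl.
  + have sp : sgn4 (-1 * (a' - a)) = SPos by apply: sgn4_pos; lra.
    rewrite sp in H3 H4 *.
    case: T H3 H4 p1 n1 s1 {z1 p2 n2 s2 z2} => H3 H4 p1 n1 s1.
    * have := proj2 (p1 erefl) h; case: bb H3 => H3; last by case: (H3 ltac:(by []) ltac:(by [])).
      move=> *; split; [|move=> *]; lra.
    * move: (s1 erefl) => e1; rewrite z2' e1 Rplus_0_r Rmult_0_r; split; [lra|done].
    * have := proj2 (n1 erefl) h; case: bb H3 => H3; first by case: (H3 ltac:(by []) ltac:(by [])).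
      move=> *; split; [|move=> *]; lra.
    * by have := H4 erefl.
Qed.

Lemma xof_ge0 k (n : 'I_k -> nat) (z : itup n) (t : bpoint n) c :
  in_interior t -> 0 <= xof z t c.
Proof.
move=> [hp _]; rewrite /xof.
apply: (big_ind (fun y => 0 <= y)) => [|a b ha hb|i _]; [lra|lra|].
apply: (big_ind (fun y => 0 <= y)) => [|a b ha hb|j _]; [lra|lra|].
case: ifP => _; [apply: Rlt_le; apply: hp|lra].
Qed.

Lemma phibar_ext k (n : 'I_k -> nat) m (phi : itup n -> 'I_m -> R) (s s' : bpoint n) c :
  (forall i j, s i j = s' i j) -> phibar phi s c = phibar phi s' c.
Proof.
move=> h; rewrite /phibar; apply: eq_bigr => j _; congr (_ * _).
by apply: eq_bigr => i _; rewrite h.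
Qed.

Lemma main_lem k (n : 'I_k -> nat) m (phi : itup n -> 'I_m -> R) (z : itup n) :
  (forall v, v \in S_N (Nof n) -> v \in Sens (@Cset k n z) (f_z phi z)) ->
  forall t t' : bpoint n, in_interior t -> in_interior t' ->
    (forall c, phibar phi t c = phibar phi t' c) -> forall i j, t i j = t' i j.
Proof.
move=> hS t t' ht ht' hphi.
have ex : forall i j, expand z (xof z t) i j = t i j := expand_xof z ht.
have ex' : forall i j, expand z (xof z t') i j = t' i j := expand_xof z ht'.
have x0 : forall c, 0 <= xof z t c by move=> c; apply: xof_ge0.
have x0' : forall c, 0 <= xof z t' c by move=> c; apply: xof_ge0.
have inC1 := fun q => @inC k n z t q ht.
have inC2 := fun q => @inC k n z t' q ht'.
move: ex ex' x0 x0' inC1 inC2.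
move: (xof z t) (xof z t') => x x' ex ex' x0 x0' inC1 inC2.
case: (classic (forall c, x c = x' c)) => [hx|hx].
  have E : x = x' by apply: functional_extensionality.
  by move=> i j; rewrite -ex -ex' E.
exfalso.
have [c0 hc0] := not_all_ex_not _ _ hx.
pose P := fun c : 'I_(Nof n) => pbool (x c <> x' c).
have Pc0 : P c0 by apply: pboolI.
case: (@arg_minnP _ c0 P (fun c => nat_of_ord c) Pc0) => c1 Pc1 hmin.
have d1 : x c1 <> x' c1 := pboolT Pc1.
pose eps := if Rlt_dec 0 (x' c1 - x c1) then 1 else -1.
have heps : eps = 1 \/ eps = -1 by rewrite /eps; case: Rlt_dec; [left|right].
have epos : 0 < eps * (x' c1 - x c1).
  have dn : x' c1 - x c1 <> 0 by move=> e; apply: d1; lra.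
  rewrite /eps; case: Rlt_dec => h /=; first lra.
  case: (Rdichotomy _ _ dn) => h2; lra.
pose v := [ffun c => sgn4 (eps * (x' c - x c))] : {ffun 'I_(Nof n) -> sign4}.
have vS : v \in S_N (Nof n).
  rewrite inE; apply/and3P; split.
  - apply/forallP => c; rewrite ffunE /sgn4; by case: Rlt_dec => //; case: Rlt_dec.
  - by apply/existsP; exists c1; rewrite ffunE sgn4_pos.
  - apply/forallP => c; apply/implyP => /andP [vn /forallP hb].
    have dc : x c <> x' c.
      move: vn; rewrite ffunE => /eqP vn e; apply: vn; apply: sgn4_zero; rewrite e; ring.
    have le1 := hmin c (pboolI dc).
    have nlt : ~ (c1 < c)%N.
      move=> lt; move/implyP: (hb c1) => /(_ lt); rewrite ffunE sgn4_pos //.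
    have -> : c = c1 by apply: ord_inj; move: le1 nlt => /=; lia.
    by rewrite ffunE sgn4_pos.
have := hS v vS; rewrite inE => /andP [_ /pboolT [pi [_ [[i1 [Ti1 vi1]] [[bb hbb] hU]]]]].
pose g := fun y => pi (f_z phi z y).
pose sg := if bb then eps else - eps.
pose y := fun c => Rmin (x c) (x' c).
pose P1 := fun r : nat => fun c : 'I_(Nof n) => if (c < r)%N then y c else x c.
pose P2 := fun r : nat => fun c : 'I_(Nof n) => if (c < r)%N then x' c else y c.
pose Sf := fun r => sg * (g (P1 r) - g x) + sg * (g (P2 r) - g y).
have key : forall r, (r <= Nof n)%N -> 0 <= Sf r /\ ((i1 < r)%N -> 0 < Sf r).
  elim => [|r IH] hr.
  - have E1 : P1 0%N = x by apply: functional_extensionality => c; rewrite /P1 ltn0.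
    have E2 : P2 0%N = y by apply: functional_extensionality => c; rewrite /P2 ltn0.
    rewrite /Sf E1 E2; split; [lra | by rewrite ltn0].
  - have [IH1 IH2] := IH (ltnW hr).
    pose c := Ordinal hr.
    have upd_step : forall (A B : 'I_(Nof n) -> R),
        (fun c' : 'I_(Nof n) => if (c' < r.+1)%N then A c' else B c') =
        upd (fun c' : 'I_(Nof n) => if (c' < r)%N then A c' else B c') c (A c).
      move=> A B; apply: functional_extensionality => c'; rewrite /upd.
      case: eqP => [->|ne]; first by rewrite /= ltnSn.
      rewrite ltnS leq_eqVlt; have -> : (nat_of_ord c' == r) = false => //.
      by apply/negP => /eqP e; apply: ne; apply: ord_inj.
    have upd_same' : forall (A B : 'I_(Nof n) -> R),
        (fun c' : 'I_(Nof n) => if (c' < r)%N then A c' else B c') =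
        upd (fun c' : 'I_(Nof n) => if (c' < r)%N then A c' else B c') c (B c).
      move=> A B; apply: functional_extensionality => c'; rewrite /upd.
      by case: eqP => [->|ne] //=; rewrite ltnn.
    have hC1 : forall s, Rmin (x c) (y c) <= s <= Rmax (x c) (y c) -> Cset z (upd (P1 r) c s).
      move=> s hs; apply: inC1 => // c'; rewrite /upd; case: eqP => [e|_]; try rewrite e.
      + have := x0 c; have := x0' c; move: hs; rewrite /y /Rmin /Rmax;
        repeat case: Rle_dec => ?; lra.
      + rewrite /P1 /y; case: ifP => _; have := x0 c'; have := x0' c';
        rewrite /Rmin; repeat case: Rle_dec => ?; lra.
      + have := x0 c; have := x0' c; move: hs; rewrite /y /Rmin /Rmax;
        repeat case: Rle_dec => ?; lra.
      + rewrite /P1 /y; case: ifP => _; have := x0 c'; have := x0' c';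
        rewrite /Rmin; repeat case: Rle_dec => ?; lra.
    have hC2 : forall s, Rmin (y c) (x' c) <= s <= Rmax (y c) (x' c) -> Cset z (upd (P2 r) c s).
      move=> s hs; apply: inC2 => // c'; rewrite /upd; case: eqP => [e|_]; try rewrite e.
      + have := x0 c; have := x0' c; move: hs; rewrite /y /Rmin /Rmax;
        repeat case: Rle_dec => ?; lra.
      + rewrite /P2 /y; case: ifP => _; have := x0 c'; have := x0' c';
        rewrite /Rmin; repeat case: Rle_dec => ?; lra.
      + have := x0 c; have := x0' c; move: hs; rewrite /y /Rmin /Rmax;
        repeat case: Rle_dec => ?; lra.
      + rewrite /P2 /y; case: ifP => _; have := x0 c'; have := x0' c';
        rewrite /Rmin; repeat case: Rle_dec => ?; lra.
    have st1 := step_sign g hC1.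
    have st2 := step_sign g hC2.
    rewrite -(upd_step y x) -(upd_same' y x) -/(P1 r.+1) -/(P1 r) in st1.
    rewrite -(upd_step x' y) -(upd_same' x' y) -/(P2 r.+1) -/(P2 r) in st2.
    have H3 := hbb c; rewrite ffunE in H3.
    have H4 := hU c; rewrite ffunE in H4.
    have [co1 co2] := coord heps st1 st2 H3 H4.
    rewrite -/sg in co1 co2.
    have eS : Sf r.+1 = Sf r + sg * ((g (P1 r.+1) - g (P1 r)) + (g (P2 r.+1) - g (P2 r))).
      by rewrite /Sf; ring.
    rewrite eS; split; first lra.
    rewrite ltnS leq_eqVlt => /orP [/eqP e|lt]; last by have := IH2 lt; lra.
    have ec : i1 = c by apply: ord_inj.
    rewrite ec in Ti1 vi1; rewrite ffunE in vi1.
    have := co2 Ti1 vi1; lra.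
have [_ pos] := key (Nof n) (leqnn _).
have := pos (ltn_ord i1).
have E1 : P1 (Nof n) = y by apply: functional_extensionality => c; rewrite /P1 ltn_ord.
have E2 : P2 (Nof n) = x' by apply: functional_extensionality => c; rewrite /P2 ltn_ord.
have gxx : g x = g x'.
  rewrite /g; f_equal; apply: functional_extensionality => c; rewrite /f_z.
  by rewrite (phibar_ext phi c ex) (phibar_ext phi c ex'); exact: hphi.
rewrite /Sf E1 E2 gxx; lra.
Qed.

Theorem corollary3p2 (k : nat) (n : 'I_k -> nat) (m : nat)
  (phi : itup n -> 'I_m -> R) :
  cs phi = INR (Nof n) ->
  forall t t' : bpoint n, in_interior t -> in_interior t' ->
    (forall c, phibar phi t c = phibar phi t' c) ->
    forall i j, t i j = t' i j.
Proof.
move=> hcs t t' ht ht' hphi.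
case: (posnP (Nof n)) => [N0|Np]; last first.
  have [z hz] := cs_extract hcs Np.
  exact: (main_lem hz ht ht' hphi).
have npos : forall i, (0 < n i)%N.
  move=> i; rewrite lt0n; apply/negP => /eqP E.
  have h := proj2 ht i; move: h; move: (t i).
  rewrite E => ti; rewrite big_ord0 => h; lra.
pose z0 := [ffun i => Ordinal (npos i)] : itup n.
apply: (main_lem (z := z0)) => // v.
rewrite inE => /and3P [_ /existsP [i _] _].
by have := ltn_ord i; rewrite {2}N0.
Qed.
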